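(* For every prime power $q$ there exists an $[n,2]_q$ MWS code with $n=\frac{q(q+1)}{2}=\left\lceil\frac{q\,\theta_q(1)}{2}\right\rceil$; hence the lower bound $n\ge\lceil q\theta_q(k-1)/2\rceil$ for $[n,k]_q$ MWS codes with $k\ge2$ is attained when $k=2$.
   Context: An $[n,k]_q$ code is a $k$-dimensional subspace of $\mathbb{F}_q^n$, non-degenerate (no coordinate identically zero on the code). $\theta_q(m)=\frac{q^{m+1}-1}{q-1}$, so $\theta_q(1)=q+1$. The code is MWS if the set of its non-zero Hamming weights has cardinality $\theta_q(k-1)$. *)

(* Defs.v *)
From HB Require Import structures.
From mathcomp Require Import all_boot all_order all_algebra all_field.
Set Implicit Arguments. Unset Strict Implicit. Unset Printing Implicit Defensive.
Import GRing.Theory.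
Local Open Scope ring_scope.

Definition wt (F : finFieldType) (n : nat) (v : 'rV[F]_n) : nat :=
  #|[set i : 'I_n | v 0 i != 0]|.

Definition nondegenerate (F : finFieldType) (n : nat) (C : {vspace 'rV[F]_n}) :=
  forall i : 'I_n, exists2 v, v \in C & v 0 i != 0.

Definition is_code (F : finFieldType) (n k : nat) (C : {vspace 'rV[F]_n}) :=
  \dim C = k /\ nondegenerate C.

Definition nonzero_weights (F : finFieldType) (n : nat) (C : {vspace 'rV[F]_n})
  : seq nat :=
  undup [seq wt v | v <- enum 'rV[F]_n & (v \in C) && (v != 0)].

Definition theta (q m : nat) : nat := (q ^ m.+1 - 1) %/ (q - 1).

Definition MWS (F : finFieldType) (n k : nat) (C : {vspace 'rV[F]_n}) : Prop :=
  size (nonzero_weights C) = theta #|F| k.-1.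

(* Main.v *)
Require Import Defs.
From HB Require Import structures.
From mathcomp Require Import all_boot all_order all_algebra all_field.
From mathcomp Require Import ring zify.
Set Implicit Arguments. Unset Strict Implicit. Unset Printing Implicit Defensive.
Import GRing.Theory.

Definition Aset (F : finFieldType) : {set 'I_#|F| * F} :=
  [set p : 'I_#|F| * F | (p.1 <= enum_rank p.2)%N].
Definition colv (F : finFieldType) (i : 'I_#|Aset F|) : F := (enum_val i).2.

Lemma card_le_ord (q m : nat) : (m < q)%N -> #|[set j : 'I_q | (j <= m)%N]| = m.+1.
Proof.
move=> mq.
have -> : [set j : 'I_q | (j <= m)%N] = (widen_ord mq) @: [set: 'I_m.+1].
  apply/setP => j; rewrite !inE; apply/idP/imsetP => [jm|[k _ ->]].
  - by exists (@Ordinal m.+1 j jm) => //; apply: val_inj.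
  - by rewrite /= -ltnS.
by rewrite card_imset ?cardsT ?card_ord //; by move=> a b /(congr1 val) /= /val_inj.
Qed.

Lemma fiber (F : finFieldType) (d : F) :
  #|[set i : 'I_#|Aset F| | colv i == d]| = (enum_rank d).+1.
Proof.
transitivity (\sum_(i < #|Aset F| | (enum_val i).2 == d) 1)%N.
  by rewrite -sum1_card; apply: eq_bigl => i; rewrite inE.
rewrite -(@big_enum_val_cond nat addn 0 _ (mem (Aset F)) (fun p => p.2 == d) (fun _ => 1%N)).
rewrite sum1dep_card.

have -> : [set x in Aset F | x.2 == d] = (fun j => (j, d)) @: [set j : 'I_#|F| | (j <= enum_rank d)%N].
  apply/setP => [[j e]]; rewrite !inE /=; apply/andP/imsetP => [[je /eqP ed]|[k kin [-> ->]]].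
  - by exists j; rewrite ?inE -?ed.
  - by move: kin; rewrite inE => ->.
rewrite card_imset; last by move=> a b [].
by apply: card_le_ord.
Qed.

Lemma fiberA (F : finFieldType) (d : F) :
  #|[set x in Aset F | x.2 == d]| = (enum_rank d).+1.
Proof.
have -> : [set x in Aset F | x.2 == d] = (fun j => (j, d)) @: [set j : 'I_#|F| | (j <= enum_rank d)%N].
  apply/setP => [[j e]]; rewrite !inE /=; apply/andP/imsetP => [[je /eqP ed]|[k kin [-> ->]]].
  - by exists j; rewrite ?inE -?ed.
  - by move: kin; rewrite inE => ->.
rewrite card_imset; last by move=> a b [].
by apply: card_le_ord.
Qed.

Lemma cardA (F : finFieldType) : #|Aset F| = (#|F| * (#|F| + 1)) %/ 2.
Proof.
rewrite -sum1_card (partition_big (fun p => p.2) predT) //=.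
under eq_bigr => d _ do rewrite sum1dep_card fiberA.
rewrite (reindex _ (onW_bij _ (enum_val_bij F))) /=.
under eq_bigr => j _ do rewrite enum_valK.
have := bin2_sum #|F|.+1; rewrite big_mkord big_ord_recl /= add0n => ->.
by rewrite bin2 divn2 /= mulnC addn1.
Qed.

Local Open Scope ring_scope.

Definition r1 (F : finFieldType) : 'rV[F]_(#|Aset F|) := \row_i 1.
Definition r2 (F : finFieldType) : 'rV[F]_(#|Aset F|) := \row_i colv i.
Definition Ccode (F : finFieldType) : {vspace 'rV[F]_#|Aset F|} :=
  <<[:: r1 F; r2 F]>>%VS.

Lemma memC (F : finFieldType) v : v \in Ccode F -> exists x y, v = x *: r1 F + y *: r2 F.
Proof.
rewrite /Ccode span_cons span_seq1 => /memv_addP [u /vlineP [x ->] [w /vlineP [y ->] ->]].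
by exists x, y.
Qed.

Lemma inC (F : finFieldType) (x y : F) : x *: r1 F + y *: r2 F \in Ccode F.
Proof. by rewrite rpredD // rpredZ // memv_span // !inE eqxx ?orbT. Qed.

Lemma exists_col (F : finFieldType) (d : F) : exists i, colv i = d.
Proof.
have : (0 < #|[set i : 'I_#|Aset F| | colv i == d]|)%N by rewrite fiber.
by case/card_gt0P => i; rewrite inE => /eqP; exists i.
Qed.

Lemma wtE (F : finFieldType) n (v : 'rV[F]_n) : wt v = subn n #|[set i | v 0 i == 0]|.
Proof.
rewrite /wt -[X in subn X _]card_ord -(cardsC [set i | v 0 i == 0]) addKn.
by apply: eq_card => i; rewrite !inE.
Qed.

Lemma key (F : finFieldType) (x y c : F) : y != 0 -> (x + y * c == 0) = (c == - x / y).
Proof.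
move=> hy; apply/eqP/eqP => [h|->].
- apply: (mulfI hy); rewrite mulrCA divff // mulr1; apply/eqP; rewrite -addr_eq0 addrC; exact/eqP.
- by rewrite mulrCA divff // mulr1 subrr.
Qed.

Lemma entry (F : finFieldType) (x y : F) i : (x *: r1 F + y *: r2 F) 0 i = x + y * colv i.
Proof. by rewrite !mxE mulr1. Qed.

Lemma wt_line (F : finFieldType) (x y : F) : y != 0 ->
  wt (x *: r1 F + y *: r2 F) = (#|Aset F| - (enum_rank (- x / y)).+1)%N.
Proof.
move=> hy; rewrite wtE -fiber; congr (_ - _)%N; apply: eq_card => i.
by rewrite !inE entry key.
Qed.

Lemma wt_const (F : finFieldType) (x : F) : x != 0 -> wt (x *: r1 F + 0 *: r2 F) = #|Aset F|.
Proof.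
move=> hx; rewrite wtE.
have -> : [set i | (x *: r1 F + 0 *: r2 F) 0 i == 0] = set0.
  by apply/setP => i; rewrite !inE entry mul0r addr0 (negbTE hx).
by rewrite cards0 subn0.
Qed.

Lemma wt0 (F : finFieldType) n : wt (0 : 'rV[F]_n) = 0%N.
Proof. by apply/eqP; rewrite cards_eq0; apply/eqP/setP => i; rewrite !inE mxE eqxx. Qed.

Lemma theta1 q : (1 < q)%N -> theta q 1 = q.+1.
Proof.
move=> hq; rewrite /theta -{2}(exp1n 2) subn_sqr mulKn ?addn1 // subn_gt0 //.
Qed.

Lemma tri_gt q : (1 < q -> q < (q * (q + 1)) %/ 2)%N.
Proof. by move=> hq; rewrite leq_divRL //; nia. Qed.

Lemma parity q : ((q * q.+1 + 1) %/ 2 = (q * (q + 1)) %/ 2)%N.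
Proof.
rewrite !addn1 !divn2.
have ev : odd (q * q.+1) = false by rewrite oddM /=; case: (odd q).
rewrite -{1}(odd_double_half (q * q.+1)) ev add0n.
set h := (q * q.+1)./2.
exact: (half_bit_double h true).
Qed.

Local Close Scope ring_scope.
Theorem mainTheorem12 (F : finFieldType) :
  exists (n : nat) (C : {vspace 'rV[F]_n}),
    [/\ n = (#|F| * (#|F| + 1)) %/ 2,
        n = (#|F| * theta #|F| 1 + 1) %/ 2,   (* = ceil(q * theta_q(1) / 2) *)
        @is_code F n 2 C
      & @MWS F n 2 C].
Proof.
Local Open Scope ring_scope.
have hq : (1 < #|F|)%N := card_finNzRing_gt1 F.
have hn : (#|F| < #|Aset F|)%N.
  by rewrite cardA; apply: tri_gt.
exists #|Aset F|, (Ccode F); split.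
- exact: cardA.
- by rewrite theta1 // cardA parity.
- split.
  + have : free [:: r1 F; r2 F].
      rewrite free_cons seq1_free span_seq1; apply/andP; split.
      * apply/vlineP => -[k hk]; have [i hi] := exists_col (0 : F).
        have := congr1 (fun v : 'rV[F]_#|Aset F| => v 0 i) hk; rewrite !mxE hi mulr0 => /eqP.
        by rewrite oner_eq0.
      * apply/eqP => h0; have [i hi] := exists_col (1 : F).
        have := congr1 (fun v : 'rV[F]_#|Aset F| => v 0 i) h0; rewrite !mxE hi => /eqP.
        by rewrite oner_eq0.
    by move/eqP.
  + move=> i; exists (r1 F); last by rewrite mxE oner_eq0.
    by have := @inC F 1 0; rewrite scale1r scale0r addr0.
- rewrite /MWS theta1 // /nonzero_weights.
  set ws := [seq wt v | v <- _ & _].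
  have ut : uniq [seq (#|Aset F| - k)%N | k <- iota 0 #|F|.+1].
    rewrite map_inj_in_uniq ?iota_uniq // => a b; rewrite !mem_iota => /andP[_ ha] /andP[_ hb] h.
    lia.
  have em : undup ws =i [seq (#|Aset F| - k)%N | k <- iota 0 #|F|.+1].
    move=> w; rewrite mem_undup; apply/mapP/mapP.
    - case=> v; rewrite mem_filter => /andP[/andP[vC vnz] _] ->.
      case: (memC vC) => x [y vE]; case: (eqVneq y 0) => [y0|yn].
      + exists 0%N; first by rewrite mem_iota.
        rewrite subn0 vE y0 wt_const //.
        by apply: contraNneq vnz => x0; rewrite vE x0 y0 !scale0r addr0.
      + exists (enum_rank (- x / y)).+1; first by rewrite mem_iota add0n ltnS ltn_ord.
        by rewrite vE wt_line.
    - case=> k; rewrite mem_iota add0n ltnS => kq ->.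
      case: k kq => [|m] hm.
      + exists (1 *: r1 F + 0 *: r2 F); last by rewrite wt_const ?oner_eq0 // subn0.
        rewrite mem_filter inC mem_enum andbT /=.
        apply/negP => /eqP h; have := @wt_const F 1 (oner_neq0 F); rewrite h wt0.
        by move=> h'; move: hn; rewrite -h'.
      + pose d := enum_val (Ordinal hm : 'I_#|F|).
        have wE : wt ((- d) *: r1 F + 1 *: r2 F) = (#|Aset F| - m.+1)%N.
          by rewrite wt_line ?oner_eq0 // opprK divr1 enum_valK.
        exists ((- d) *: r1 F + 1 *: r2 F); last by rewrite wE.
        rewrite mem_filter inC mem_enum andbT /=.
        apply/negP => /eqP h; move: wE; rewrite h wt0 => /eqP; rewrite eq_sym subn_eq0.
        by move=> h'; move: (leq_trans h' hm); rewrite leqNgt hn.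
  by rewrite (perm_size (uniq_perm (undup_uniq _) ut em)) size_map size_iota.
Qed.
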